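(* Let $G$ be a grid-labelled graph of type $(a,b)$ with at least one edge. If $\rho(G)$ is separable, then $D(G)=D(\Gamma(G))$, i.e. every vertex has the same degree in $G$ and in $\Gamma(G)$.
   Context: A grid-labelled graph of type $(a,b)$ is a simple graph $G$ whose vertex set is the grid $[a]\times[b]$; $D(G)$ denotes its (diagonal) degree matrix and $L(G)=D(G)-A(G)$ its combinatorial Laplacian. If $G$ has $m\ge1$ edges, $\rho(G)=L(G)/(2m)$, viewed as a density matrix on $\mathbb{C}^a\otimes\mathbb{C}^b$ with vertex $(i,j)$ corresponding to $|i\rangle\otimes|j\rangle$. Separable means a convex combination of tensor products of density matrices. The partial transpose of $G$ is the grid-labelled graph $\Gamma(G)$ of type $(a,b)$ with edge set $\{\{(k,j),(i,l)\}:\{(i,j),(k,l)\}\in E(G)\}$ (horizontal and vertical edges are unchanged; each diagonal edge is replaced by its ''transposed'' edge). *)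

(* Defs.v *)
From HB Require Import structures.
From mathcomp Require Import all_boot all_order all_algebra all_field.
Set Implicit Arguments. Unset Strict Implicit. Unset Printing Implicit Defensive.
Import Order.TTheory GRing.Theory Num.Theory.
Local Open Scope ring_scope.

Section Grid.
Variables a b : nat.

Definition vtx := ('I_a * 'I_b)%type.

(* basis index of |i> (x) |j> in C^a (x) C^b = C^(a*b) *)
Definition idx (x : vtx) : 'I_(a * b) := mxvec_index x.1 x.2.

Definition simple_graph (e : rel vtx) : Prop := symmetric e /\ irreflexive e.

Definition edges (e : rel vtx) : {set {set vtx}} :=
  [set [set p.1; p.2] | p in [set p : vtx * vtx | e p.1 p.2]].

Definition nedges (e : rel vtx) : nat := #|edges e|.

Definition deg (e : rel vtx) (x : vtx) : nat := #|[set y | e x y]|.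

Definition Dmx (e : rel vtx) : 'M[algC]_(a * b) :=
  \sum_(x : vtx) (deg e x)%:R *: delta_mx (idx x) (idx x).

Definition Amx (e : rel vtx) : 'M[algC]_(a * b) :=
  \sum_(x : vtx) \sum_(y : vtx) (e x y)%:R *: delta_mx (idx x) (idx y).

Definition Lmx (e : rel vtx) : 'M[algC]_(a * b) := Dmx e - Amx e.

Definition rho (e : rel vtx) : 'M[algC]_(a * b) :=
  ((2 * nedges e)%:R)^-1 *: Lmx e.

Definition Gamma (e : rel vtx) : rel vtx :=
  fun x y => e (y.1, x.2) (x.1, y.2).

End Grid.

Definition kron (a b : nat) (A : 'M[algC]_a) (B : 'M[algC]_b) : 'M[algC]_(a * b) :=
  \sum_(i : 'I_a) \sum_(k : 'I_a) \sum_(j : 'I_b) \sum_(l : 'I_b)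
     (A i k * B j l) *: delta_mx (mxvec_index i j) (mxvec_index k l).

Definition adjmx (m n : nat) (A : 'M[algC]_(m, n)) : 'M[algC]_(n, m) :=
  (map_mx Num.conj A)^T.

Definition density (n : nat) (A : 'M[algC]_n) : Prop :=
  [/\ adjmx A = A,
      (forall v : 'cV[algC]_n, 0 <= (adjmx v *m A *m v) 0 0)
    & \tr A = 1].

Definition separable_state (a b : nat) (R : 'M[algC]_(a * b)) : Prop :=
  exists (N : nat) (p : 'I_N -> algC) (A : 'I_N -> 'M[algC]_a) (B : 'I_N -> 'M[algC]_b),
    [/\ forall t, 0 <= p t,
        \sum_(t < N) p t = 1,
        forall t, density (A t),
        forall t, density (B t)
      & R = \sum_(t < N) p t *: kron (A t) (B t)].

(* Main.v *)
Require Import Defs.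
From HB Require Import structures.
From mathcomp Require Import all_boot all_order all_algebra all_field.
From mathcomp Require Import sesquilinear spectral ring.
Import Order.TTheory GRing.Theory Num.Theory.
Local Open Scope ring_scope.

Section PSD.
Local Open Scope sesquilinear_scope.
Lemma psd_decomp n (B : 'M[algC]_n) : density B ->
  exists (P : 'M[algC]_n) (d : 'I_n -> algC), (forall k, 0 <= d k) /\
   forall j l, B j l = \sum_k (P k j)^* * d k * P k l.
Proof.
case=> Bh Bp _.
have Bherm : B \is hermsymmx.
  apply/is_hermitianmxP; rewrite expr0 scale1r.
  by rewrite -{1}Bh /adjmx map_trmx.
have /orthomx_spectralP Beq := hermitian_normalmx Bherm.
set P := spectralmx B in Beq; set d := spectral_diag B in Beq.
have Pu : P \is unitarymx by exact: spectral_unitarymx.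
rewrite invmx_unitary // in Beq.
have PP := unitarymxP Pu.
exists P, (fun k => d 0 k); split; last first.
  move=> j l; rewrite Beq !mxE; apply: eq_bigr => k _; rewrite !mxE.
  rewrite (bigD1 k) //= big1 ?addr0; last first.
    move=> kk nk; rewrite !mxE; by move: nk; case: eqP => // _ _; rewrite mulr0n mulr0.
  by rewrite /= !mxE eqxx mulr1n.
move=> k.
pose r : 'rV[algC]_n := delta_mx 0 k *m P.
have := Bp (adjmx r).
have -> : adjmx (adjmx r) = r.
  by apply/matrixP=> i i'; rewrite !mxE conjCK.
have -> : adjmx r = (r)^t* by rewrite /adjmx map_trmx.
rewrite /r Beq !mulmxA -(mulmxA 'e_k P) PP mulmx1.
rewrite trmx_mul map_mxM !mulmxA -(mulmxA _ P (P^t*)) PP mulmx1.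
rewrite -rowE row_diag_mx -scalemxAl.
have -> : ('e_k)^t* = delta_mx k (0 : 'I_1) :> 'M[algC]_(n,1).
  by apply/matrixP=> i i'; rewrite !mxE conjC_nat andbC.
by rewrite mul_delta_mx !mxE !eqxx mulr1.
Qed.

End PSD.

Lemma form_psd n (A : 'M[algC]_n) (u : 'I_n -> algC) : density A ->
  0 <= \sum_i \sum_k (u i)^* * A i k * u k.
Proof.
case=> _ Ap _; have := Ap (\col_i u i).
rewrite !mxE; set S := (X in 0 <= X -> _).
suff -> : S = \sum_i \sum_k (u i)^* * A i k * u k by [].
rewrite /S exchange_big; apply: eq_bigr => k _; rewrite !mxE mulr_suml.
by apply: eq_bigr => i _; rewrite !mxE.
Qed.

Lemma kron_form a b (A : 'M[algC]_a) (B : 'M[algC]_b) (v : 'I_a -> 'I_b -> algC) :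
  density A -> density B ->
  0 <= \sum_i \sum_j \sum_k \sum_l (v i j)^* * (A i k * B l j) * v k l.
Proof.
move=> dA /psd_decomp [P [d [d0 BE]]].
pose u r i := \sum_j v i j * (P r j)^*.
have key : \sum_i \sum_j \sum_k \sum_l (v i j)^* * (A i k * B l j) * v k l =
   \sum_r d r * (\sum_i \sum_k (u r i)^* * A i k * u r k).
  transitivity (\sum_i \sum_k A i k * \sum_r d r * ((u r i)^* * u r k)).
    apply: eq_bigr => i _; rewrite exchange_big; apply: eq_bigr => k _.
    transitivity (A i k * \sum_j \sum_l \sum_r d r *
        (((v i j)^* * P r j) * (v k l * (P r l)^*))).
      rewrite mulr_sumr; apply: eq_bigr => j _; rewrite mulr_sumr.
      apply: eq_bigr => l _; rewrite BE !mulr_sumr mulr_suml; apply: eq_bigr => r _.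
      ring.
    congr (_ * _).
    under eq_bigr => j _ do rewrite exchange_big.
    rewrite exchange_big; apply: eq_bigr => r _.
    rewrite /u rmorph_sum big_distrlr mulr_sumr; apply: eq_bigr => j _.
    rewrite mulr_sumr; apply: eq_bigr => l _ /=.
    by rewrite rmorphM /= conjCK.
  symmetry; under eq_bigr => r _ do rewrite mulr_sumr.
  rewrite exchange_big; apply: eq_bigr => i _.
  under eq_bigr => r _ do rewrite mulr_sumr.
  rewrite exchange_big; apply: eq_bigr => k _.
  rewrite mulr_sumr; apply: eq_bigr => r _; ring.
rewrite key; apply: sumr_ge0 => r _; apply: mulr_ge0 => //.
exact: form_psd.
Qed.

Lemma sumD (I : finType) (i0 : I) (F : I -> algC) :
  \sum_i (i0 == i)%:R * F i = F i0.
Proof.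
rewrite (bigD1 i0) //= eqxx mul1r big1 ?addr0 // => i.
by rewrite eq_sym => /negPf ->; rewrite mul0r.
Qed.


Lemma mxvec_index_inj m n (i k : 'I_m) (j l : 'I_n) :
  (mxvec_index i j == mxvec_index k l) = (i == k) && (j == l).
Proof.
apply/eqP/andP; last by case=> /eqP -> /eqP ->.
move=> E; have := mxvecE (delta_mx i j : 'M[int]_(m, n)) k l.
rewrite -E mxvecE !mxE !eqxx /=.
by case: eqP => [->|] //; case: eqP => [->|] //; rewrite ?andbF.
Qed.



Lemma kronE a b (A : 'M[algC]_a) (B : 'M[algC]_b) i j k l :
  kron A B (mxvec_index i j) (mxvec_index k l) = A i k * B j l.
Proof.
rewrite /kron summxE.
transitivity (\sum_(i0 : 'I_a) (i == i0)%:R * \sum_(k0 : 'I_a) (k == k0)%:R *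
   \sum_(j0 : 'I_b) (j == j0)%:R * \sum_(l0 : 'I_b) (l == l0)%:R * (A i0 k0 * B j0 l0)).
  apply: eq_bigr => i0 _; rewrite summxE mulr_sumr; apply: eq_bigr => k0 _.
  rewrite summxE mulr_sumr mulr_sumr; apply: eq_bigr => j0 _.
  rewrite summxE mulr_sumr mulr_sumr mulr_sumr; apply: eq_bigr => l0 _.
  rewrite !mxE !mxvec_index_inj.
  by case: (i == i0); case: (k == k0); case: (j == j0); case: (l == l0);
    rewrite /= ?mulr1 ?mulr0 ?mul1r ?mul0r.
by rewrite sumD sumD sumD sumD.
Qed.

Lemma idx_eq a b (x y : vtx a b) : (idx x == idx y) = (x == y).
Proof. by case: x => i j; case: y => k l; rewrite /idx /= mxvec_index_inj. Qed.

Lemma rhoE a b (e : rel (vtx a b)) x y :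
  rho e (idx x) (idx y) =
  ((2 * nedges e)%N%:R)^-1 * ((deg e x)%:R * (x == y)%:R - (e x y)%:R).
Proof.
rewrite /rho /Lmx !mxE; congr (_ * _).
rewrite /Dmx /Amx !summxE; congr (_ - _).
  transitivity (\sum_x0 (x == x0)%:R * ((deg e x0)%:R * (y == x0)%:R) : algC).
    apply: eq_bigr => x0 _; rewrite !mxE !idx_eq.
    by case: (x == x0); case: (y == x0); rewrite /= ?mulr1 ?mulr0 ?mul1r ?mul0r.
  by rewrite sumD eq_sym.
transitivity (\sum_x0 (x == x0)%:R * \sum_y0 (y == y0)%:R * (e x0 y0)%:R : algC).
  apply: eq_bigr => x0 _; rewrite summxE mulr_sumr; apply: eq_bigr => y0 _.
  rewrite !mxE !idx_eq.
  by case: (x == x0); case: (y == y0); rewrite /= ?mulr1 ?mulr0 ?mul1r ?mul0r.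
by rewrite sumD sumD.
Qed.

Lemma sum_pair a b (G : 'I_a * 'I_b -> algC) : \sum_x G x = \sum_i \sum_j G (i, j).
Proof. by rewrite pair_big; apply: eq_bigr => -[i j]. Qed.

Lemma sum_pair2 a b (G : 'I_a * 'I_b -> 'I_a * 'I_b -> algC) :
  \sum_x \sum_y G x y = \sum_i \sum_j \sum_k \sum_l G (i, j) (k, l).
Proof.
rewrite sum_pair; apply: eq_bigr => i _; apply: eq_bigr => j _; exact: sum_pair.
Qed.



Lemma sep_form a b (R : 'M[algC]_(a * b)) (v : vtx a b -> algC) :
  separable_state R ->
  0 <= \sum_x \sum_y (v x)^* * R (idx (x.1, y.2)) (idx (y.1, x.2)) * v y.
Proof.
case=> N [p [A [B [p0 _ dA dB ->]]]].
have -> : \sum_x \sum_y (v x)^* * (\sum_(t < N) p t *: kron (A t) (B t))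
      (idx (x.1, y.2)) (idx (y.1, x.2)) * v y =
   \sum_(t < N) p t * \sum_x \sum_y (v x)^* * (A t x.1 y.1 * B t y.2 x.2) * v y.
  transitivity (\sum_x \sum_y \sum_(t < N)
      p t * ((v x)^* * (A t x.1 y.1 * B t y.2 x.2) * v y)).
    apply: eq_bigr => x _; apply: eq_bigr => y _.
    rewrite summxE mulr_sumr mulr_suml; apply: eq_bigr => t _.
    rewrite mxE /idx /= kronE; ring.
  symmetry; under eq_bigr => t _ do rewrite mulr_sumr.
  rewrite exchange_big; apply: eq_bigr => x _.
  under eq_bigr => t _ do rewrite mulr_sumr.
  by rewrite exchange_big.
apply: sumr_ge0 => t _; apply: mulr_ge0 => //.
rewrite sum_pair2.
have H := kron_form _ _ (A t) (B t) (fun i j => v (i, j)) (dA t) (dB t); exact H.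
Qed.

Lemma deg_sum a b (e : rel (vtx a b)) x :
  (deg e x)%:R = \sum_y (e x y)%:R :> algC.
Proof.
rewrite /deg -sum1_card natr_sum big_mkcond /=; apply: eq_bigr => y _.
by rewrite inE; case: (e x y).
Qed.

Lemma Gamma_sum a b (e : rel (vtx a b)) :
  \sum_x \sum_y (e x y)%:R = \sum_x \sum_y (Gamma e x y)%:R :> algC.
Proof.
pose f (p : vtx a b * vtx a b) : vtx a b * vtx a b :=
  ((p.2.1, p.1.2), (p.1.1, p.2.2)).
have finv : involutive f by case=> -[i j] [k l].
rewrite !pair_big (reindex_inj (inv_inj finv)) /=.
by apply: eq_bigr => -[[i j] [k l]].
Qed.

Lemma sum_v (I : finType) (z : I) (al be : algC) (G : I -> algC) :
  \sum_x (al + be * (x == z)%:R) * G x = al * \sum_x G x + be * G z.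
Proof.
rewrite mulr_sumr -(sumD _ z (fun x => be * G x)) -big_split /=.
by apply: eq_bigr => x _; rewrite eq_sym; ring.
Qed.

Lemma quad a b (e : rel (vtx a b)) (z : vtx a b) (al be : algC) :
  simple_graph e ->
  let v x := al + be * (x == z)%:R in
  let M x y := (deg e x)%:R * (x == y)%:R - (Gamma e x y)%:R in
  \sum_x \sum_y v x * M x y * v y =
  2 * al * be * ((deg e z)%:R - (deg (Gamma e) z)%:R) + be ^+ 2 * (deg e z)%:R.
Proof.
case=> esym eirr v M.
have GS x y : Gamma e x y = Gamma e y x by rewrite /Gamma esym.
have rowM x : \sum_y M x y = (deg e x)%:R - (deg (Gamma e) x)%:R.
  rewrite /M sumrB (deg_sum _ _ (Gamma e)); congr (_ - _).
  by under eq_bigr => y _ do rewrite mulrC; exact: sumD.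
have colM : \sum_x M x z = (deg e z)%:R - (deg (Gamma e) z)%:R.
  rewrite /M sumrB (deg_sum _ _ (Gamma e)); congr (_ - _).
    rewrite -(sumD _ z (fun y => (deg e y)%:R)).
    by apply: eq_bigr => y _; rewrite mulrC eq_sym.
  by apply: eq_bigr => y _; rewrite GS.
have Mzz : M z z = (deg e z)%:R.
  by rewrite /M eqxx /Gamma eirr subr0 mulr1.
have tot : \sum_x ((deg e x)%:R - (deg (Gamma e) x)%:R) = 0 :> algC.
  rewrite sumrB; under eq_bigr => x _ do rewrite deg_sum.
  under [X in _ - X]eq_bigr => x _ do rewrite deg_sum.
  by rewrite Gamma_sum subrr.
transitivity (\sum_x v x * \sum_y M x y * v y).
  by apply: eq_bigr => x _; rewrite mulr_sumr; apply: eq_bigr => y _; rewrite mulrA.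
transitivity (\sum_x v x * (al * ((deg e x)%:R - (deg (Gamma e) x)%:R) + be * M x z)).
  apply: eq_bigr => x _; congr (_ * _).
  under eq_bigr => y _ do rewrite mulrC.
  by rewrite sum_v rowM.
rewrite sum_v big_split /= -mulr_sumr tot -mulr_sumr colM Mzz.
ring.
Qed.

Theorem mainTheorem4 (a b : nat) (e : rel (vtx a b)) :
  simple_graph e -> (0 < nedges e)%N -> separable_state (rho e) ->
  Dmx e = Dmx (Gamma e).
Proof.
move=> sim m0 sep.
suff Hz : forall z, deg e z = deg (Gamma e) z.
  by rewrite /Dmx; apply: eq_bigr => z _; rewrite Hz.
move=> z; have [esym eirr] := sim.
set D := deg e z; set D' := deg (Gamma e) z.
pose al : algC := (D + 1)%:R; pose be : algC := D'%:R - D%:R.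
pose v x := al + be * (x == z)%:R.
pose c : algC := ((2 * nedges e)%N%:R)^-1.
have c0 : 0 < c by rewrite /c invr_gt0 ltr0n muln_gt0.
have := sep_form _ _ (rho e) v sep.
have vr x : (v x)^* = v x.
  by rewrite /v rmorphD rmorphM /= rmorphB /= !conjC_nat.
have -> : \sum_x \sum_y (v x)^* * rho e (idx (x.1, y.2)) (idx (y.1, x.2)) * v y
   = c * \sum_x \sum_y v x * ((deg e x)%:R * (x == y)%:R - (Gamma e x y)%:R) * v y.
  rewrite mulr_sumr; apply: eq_bigr => x _; rewrite mulr_sumr; apply: eq_bigr => y _.
  rewrite vr rhoE.
  have -> : ((x.1, y.2) == (y.1, x.2)) = (x == y).
    by case: x => i j; case: y => k l; rewrite !xpair_eqE /= [l == j]eq_sym.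
  have -> : e (x.1, y.2) (y.1, x.2) = Gamma e x y by rewrite /Gamma esym.
  have -> : (deg e (x.1, y.2))%:R * (x == y)%:R = (deg e x)%:R * (x == y)%:R :> algC.
    by case: eqP => [->|]; rewrite ?mulr0 //; case: y.
  rewrite /c; ring.
rewrite (quad _ _ e z al be sim) pmulr_rge0 //.
have -> : 2 * al * be * (D%:R - D'%:R) + be ^+ 2 * D%:R = - (be ^+ 2 * (D + 2)%:R).
  rewrite /al /be !natrD; ring.
rewrite oppr_ge0 => H.
have bereal : be \is Num.real by rewrite rpredB ?realn.
have Hge : 0 <= be ^+ 2 * (D + 2)%:R.
  by rewrite mulr_ge0 // -real_normK // exprn_ge0.
have : be ^+ 2 * (D + 2)%:R == 0 by rewrite eq_le H Hge.
rewrite mulf_eq0 pnatr_eq0 addn2 /= orbF sqrf_eq0 subr_eq0 eqr_nat.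
by move/eqP.
Qed.
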